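(* Let $T_{a_1\dots a_r}$ be a rank-$r$ tensor. Then $(T\,{}_i\!\times_i T)=0$ for all $i=1,\dots,r$ if and only if either $T=0$ or $T_{a_1\dots a_r}=k^{(1)}_{a_1}k^{(2)}_{a_2}\cdots k^{(r)}_{a_r}$ for some null vectors $k^{(1)},\dots,k^{(r)}$. Consequently, if $(T\,{}_i\!\times_i T)=0$ for all $i$, then $T\in\mathcal{DP}\cup-\mathcal{DP}$.
   Context: Lorentzian metric of signature $(+,-,\dots,-)$ with time orientation; null: $k\ne0$, $k\cdot k=0$; causal: $v\neq0$, $v\cdot v\ge0$. $(T\,{}_i\!\times_i T)$ is $T\otimes T$ with the $i$-th index of the first factor contracted with the $i$-th index of the second, other indices in order. $\mathcal{DP}$: tensors $X$ with $X_{a_1\dots a_r}u_1^{a_1}\cdots u_r^{a_r}\ge0$ for all causal future-pointing $u_j$; $-\mathcal{DP}$ their negatives. *)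

(* Defs.v *)
From HB Require Import structures.
From mathcomp Require Import all_boot all_order all_algebra.
From mathcomp Require Export reals.
Set Implicit Arguments. Unset Strict Implicit. Unset Printing Implicit Defensive.
Import Order.TTheory GRing.Theory Num.Theory.
Local Open Scope ring_scope.

(* Minkowski space R^{1,n}: indices 'I_n.+1, index ord0 is time.
   Metric eta = diag(+1,-1,...,-1) (equal to its inverse). *)
Definition eta {R : realType} {n : nat} (a : 'I_n.+1) : R :=
  if a == ord0 then 1 else -1.

Definition ldot {R : realType} {n : nat} (u v : 'I_n.+1 -> R) : R :=
  \sum_(a < n.+1) eta a * u a * v a.

Definition null_vec {R : realType} {n : nat} (k : 'I_n.+1 -> R) : Prop :=
  (exists a, k a != 0) /\ ldot k k = 0.

Definition causal_vec {R : realType} {n : nat} (v : 'I_n.+1 -> R) : Prop :=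
  (exists a, v a != 0) /\ 0 <= ldot v v.

Definition future_vec {R : realType} {n : nat} (v : 'I_n.+1 -> R) : Prop :=
  0 < v ord0.

Definition multi_index (n r : nat) := {ffun 'I_r -> 'I_n.+1}.
Definition tensor (R : realType) (n r : nat) := multi_index n r -> R.

Definition upd {n r : nat} (a : multi_index n r) (i : 'I_r) (c : 'I_n.+1)
  : multi_index n r := [ffun j => if j == i then c else a j].

(* components of (T _i x_i T): the i-th slot of the first factor contracted
   (with the metric) with the i-th slot of the second; the remaining indices
   are those of a (first factor) and b (second factor) other than slot i. *)
Definition contr_ii {R : realType} {n r : nat} (T : tensor R n r) (i : 'I_r)
  (a b : multi_index n r) : R :=
  \sum_(c < n.+1) eta c * T (upd a i c) * T (upd b i c).

Definition contr_ii_zero {R : realType} {n r : nat} (T : tensor R n r)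
  (i : 'I_r) : Prop := forall a b : multi_index n r, contr_ii T i a b = 0.

Definition eval_on {R : realType} {n r : nat} (X : tensor R n r)
  (u : 'I_r -> 'I_n.+1 -> R) : R :=
  \sum_(a : multi_index n r) X a * \prod_(j < r) u j (a j).

Definition DP {R : realType} {n r : nat} (X : tensor R n r) : Prop :=
  forall u : 'I_r -> 'I_n.+1 -> R,
    (forall j, causal_vec (u j) /\ future_vec (u j)) -> 0 <= eval_on X u.

(* Main.v *)
Require Import Defs.
From HB Require Import structures.
From mathcomp Require Import all_boot all_order all_algebra reals.
From mathcomp Require Import ring lra.
Import Order.TTheory GRing.Theory Num.Theory.
Local Open Scope ring_scope.
Set Implicit Arguments. Unset Strict Implicit.

Lemma le0r_sq (R : realType) (x : R) : 0 <= x * x.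
Proof. by rewrite -expr2 sqr_ge0. Qed.

Section Aux.
Variable R : realType.
Variable n : nat.

Lemma ldotE (u v : 'I_n.+1 -> R) :
  ldot u v = u ord0 * v ord0 - \sum_(i < n) u (lift ord0 i) * v (lift ord0 i).
Proof.
rewrite /ldot big_ord_recl /Defs.eta eqxx mul1r; congr (_ + _).
rewrite -sumrN; apply: eq_bigr => i _.
by rewrite eq_sym (negbTE (neq_lift ord0 i)) mulN1r mulNr.
Qed.

Lemma zero_time (u : 'I_n.+1 -> R) :
  ldot u u = 0 -> u ord0 = 0 -> forall c, u c = 0.
Proof.
move=> hu h0 c; rewrite ldotE h0 mul0r sub0r in hu.
have hs : \sum_(i < n) u (lift ord0 i) * u (lift ord0 i) = 0.
  by apply/eqP; rewrite -oppr_eq0 hu.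
case: (unliftP ord0 c) => [i ->| ->] //.
have := (psumr_eq0P (P := xpredT) (fun i _ => (@le0r_sq R (u (lift ord0 i)))) hs (i:=i) isT).
by move/eqP; rewrite mulf_eq0 orbb => /eqP.
Qed.

Lemma null_orth (u v : 'I_n.+1 -> R) :
  ldot u u = 0 -> ldot v v = 0 -> ldot u v = 0 -> forall c d, u c * v d = u d * v c.
Proof.
move=> hu hv huv.
pose w := fun c => v ord0 * u c - u ord0 * v c.
have hw : ldot w w = v ord0 ^+ 2 * ldot u u - 2 * u ord0 * v ord0 * ldot u v
     + u ord0 ^+ 2 * ldot v v.
  rewrite /ldot !mulr_sumr -sumrB -big_split /=; apply: eq_bigr => c _.
  rewrite /w; ring.
rewrite hu hv huv !mulr0 subrr addr0 in hw.
have hw0 : w ord0 = 0 by rewrite /w mulrC subrr.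
have hwc := zero_time hw hw0.
have key : forall c, v ord0 * u c = u ord0 * v c.
  by move=> c; apply/eqP; rewrite -subr_eq0; apply/eqP; exact: hwc.
have [u0| u0] := eqVneq (u ord0) 0.
  by move=> c d; rewrite !(zero_time hu u0) !mul0r.
move=> c d; apply: (mulfI u0).
have -> : u ord0 * (u c * v d) = u c * (u ord0 * v d) by ring.
have -> : u ord0 * (u d * v c) = u d * (u ord0 * v c) by ring.
rewrite -!key; ring.
Qed.

Lemma ldot_scale (s : R) (u : 'I_n.+1 -> R) :
  ldot (fun c => s * u c) (fun c => s * u c) = s ^+ 2 * ldot u u.
Proof. rewrite /ldot mulr_sumr; apply: eq_bigr => c _; ring. Qed.

Lemma sign_lemma (k u : 'I_n.+1 -> R) :
  ldot k k = 0 -> 0 <= ldot u u -> 0 < u ord0 ->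
  0 <= k ord0 * \sum_c k c * u c.
Proof.
rewrite !ldotE big_ord_recl => hk hu hu0.
set K := \sum_(i < n) _ in hk.
set U := \sum_(i < n) _ in hu.
set X := \sum_(i < n) _.
have hS : 0 <= \sum_(i < n) (u ord0 * k (lift ord0 i) + k ord0 * u (lift ord0 i)) ^+ 2.
  by apply: sumr_ge0 => i _; exact: sqr_ge0.
have hE : \sum_(i < n) (u ord0 * k (lift ord0 i) + k ord0 * u (lift ord0 i)) ^+ 2
   = u ord0 ^+ 2 * K + 2 * u ord0 * k ord0 * X + k ord0 ^+ 2 * U.
  rewrite /K /U /X !mulr_sumr -!big_split /=; apply: eq_bigr => i _; ring.
rewrite hE in hS.
have hK : K = k ord0 * k ord0 by lra.
have h2 : 0 <= k ord0 ^+ 2 * (u ord0 * u ord0 - U).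
  by apply: mulr_ge0; [exact: sqr_ge0 | lra].
move: hS h2; rewrite hK; clearbody X U K.
move: (k ord0) (u ord0) hu0 => a b hb hS h2.
nra.
Qed.

End Aux.

Lemma upd_id (n r : nat) (a : multi_index n r) i : upd a i (a i) = a.
Proof. by apply/ffunP => j; rewrite ffunE; case: eqP => // ->. Qed.

Lemma prod_upd (R : realType) (n r : nat) (k : 'I_r -> 'I_n.+1 -> R)
  (a : multi_index n r) i c :
  \prod_(j < r) k j (upd a i c j) = k i c * \prod_(j < r | j != i) k j (a j).
Proof.
rewrite (bigD1 i) //= ffunE eqxx; congr (_ * _).
by apply: eq_bigr => j /negbTE hj; rewrite ffunE hj.
Qed.

Unset Implicit Arguments.
Theorem mainTheorem15 (R : realType) (n r : nat) (hr : (0 < r)%N)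
  (T : tensor R n r) :
  ((forall i : 'I_r, contr_ii_zero T i) <->
     ((forall a, T a = 0) \/
      exists k : 'I_r -> 'I_n.+1 -> R,
        (forall j, null_vec (k j)) /\
        forall a : multi_index n r, T a = \prod_(j < r) k j (a j)))
  /\
  ((forall i : 'I_r, contr_ii_zero T i) ->
     DP T \/ DP (fun a => - T a)).
Proof.
have part1 : (forall i : 'I_r, contr_ii_zero T i) <->
     ((forall a, T a = 0) \/
      exists k : 'I_r -> 'I_n.+1 -> R,
        (forall j, null_vec (k j)) /\
        forall a : multi_index n r, T a = \prod_(j < r) k j (a j)).
  split; last first.
    case=> [H0 | [k [hk HT]]] i a b.
      by rewrite /contr_ii big1 // => c _; rewrite !H0 mulr0.
    have -> : contr_ii T i a b = (\prod_(j < r | j != i) k j (a j))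
       * (\prod_(j < r | j != i) k j (b j)) * ldot (k i) (k i).
      rewrite /contr_ii /ldot mulr_sumr; apply: eq_bigr => c _.
      rewrite !HT !prod_upd; ring.
    by case: (hk i) => _ ->; rewrite mulr0.
  move=> H.
  have exch : forall a b i, T a * T b = T (upd a i (b i)) * T (upd b i (a i)).
    move=> a b i.
    have := @null_orth R n (fun c => T (upd a i c)) (fun c => T (upd b i c))
      (H i a a) (H i b b) (H i a b) (a i) (b i).
    by rewrite /= !upd_id.
  case: (boolP [exists a, T a != 0]) => [/existsP [a0 Ta0] | /existsPn HN]; last first.
    by left => a; apply/eqP; move: (HN a); rewrite negbK.
  right.
  set T0 := T a0.
  have Hprod : forall a, T a * T0 ^+ r = T0 * \prod_(j < r) T (upd a0 j (a j)).
    move=> a.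
    pose am m := [ffun j : 'I_r => if (j < m)%N then a j else a0 j].
    have P : forall m, (m <= r)%N -> T (am m) * T0 ^+ m
                 = T0 * \prod_(j < r | (j < m)%N) T (upd a0 j (a j)).
      elim=> [_ | m IH hm].
        have -> : am 0%N = a0 by apply/ffunP => j; rewrite /am ffunE ltn0.
        by rewrite expr0 mulr1 big_pred0 ?mulr1 // => j; rewrite ltn0.
      pose i := Ordinal hm.
      have e1 : upd (am m) i (upd a0 i (a i) i) = am m.+1.
        apply/ffunP => j; rewrite !ffunE eqxx.
        case: (eqVneq j i) => [-> | hji] /=; first by rewrite ltnSn.
        rewrite [(j < m.+1)%N]ltnS [(j <= m)%N]leq_eqVlt.
        by have -> : (nat_of_ord j == m) = false by apply/negbTE; move: hji; apply: contra => /eqP h; apply/eqP/val_inj; exact: h.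
      have e2 : upd (upd a0 i (a i)) i (am m i) = a0.
        apply/ffunP => j; rewrite !ffunE /= ltnn.
        by case: (eqVneq j i) => [-> | _].
      have := exch (am m) (upd a0 i (a i)) i; rewrite e1 e2 => hx.
      rewrite exprS mulrA (mulrC _ T0) -mulrA.
      rewrite (bigD1 i) //=.
      have -> : \prod_(j < r | (j < m.+1)%N && (j != i)) T (upd a0 j (a j))
          = \prod_(j < r | (j < m)%N) T (upd a0 j (a j)).
        apply: eq_bigl => j; rewrite [(j < m.+1)%N]ltnS [(j <= m)%N]leq_eqVlt.
        case: (eqVneq j i) => [-> | hji] /=; first by rewrite eqxx ltnn.
        have -> : (nat_of_ord j == m) = false by apply/negbTE; move: hji; apply: contra => /eqP h; apply/eqP/val_inj; exact: h.
        by rewrite andbT.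
      congr (T0 * _); apply: (mulfI Ta0).
      have -> : T a0 * (T (am m.+1) * T0 ^+ m) = (T (am m.+1) * T a0) * T0 ^+ m by ring.
      rewrite -hx mulrAC IH ?(ltnW hm) // /T0; ring.
    have := P r (leqnn r).
    have -> : am r = a by apply/ffunP => j; rewrite ffunE ltn_ord.
    move=> ->; congr (_ * _); apply: eq_bigl => j; exact: ltn_ord.
  pose i0 := Ordinal hr.
  pose s j : R := if j == i0 then T0 else 1.
  exists (fun j c => s j / T0 * T (upd a0 j c)); split.
    move=> j; split.
      exists (a0 j); rewrite upd_id; apply: mulf_neq0 => //.
      apply: mulf_neq0; last by rewrite invr_eq0.
      by rewrite /s; case: (j == i0); [exact: Ta0 | exact: oner_neq0].
    rewrite (ldot_scale (s j / T0) (fun c => T (upd a0 j c))).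
    have h : ldot (fun c => T (upd a0 j c)) (fun c => T (upd a0 j c)) = 0 := H j a0 a0.
    by rewrite h mulr0.
  move=> a; rewrite big_split /= prodf_div prodr_const card_ord.
  have -> : \prod_(j < r) s j = T0.
    rewrite (bigD1 i0) //= /s eqxx big1 ?mulr1 // => j /negbTE ->; done.
  rewrite mulrAC -Hprod mulfK //; exact: expf_neq0.
split => //.
move=> H; case: (part1.1 H) => [H0 | [k [hk HT]]].
  left => u _; rewrite /eval_on big1 // => a _; by rewrite H0 mul0r.
have hE : forall u, eval_on T u = \prod_(j < r) \sum_(c < n.+1) k j c * u j c.
  move=> u; rewrite bigA_distr_bigA /eval_on; apply: eq_bigr => a _.
  by rewrite HT -big_split.
have hN : forall u, eval_on (fun a => - T a) u = - eval_on T u.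
  by move=> u; rewrite /eval_on -sumrN; apply: eq_bigr => a _; rewrite mulNr.
have hk0 : forall j, k j ord0 != 0.
  move=> j; apply/negP => /eqP h; case: (hk j) => [[c hc] hn].
  by move: hc; rewrite (zero_time hn h) eqxx.
have hsgn : forall u, (forall j, causal_vec (u j) /\ future_vec (u j)) ->
   0 <= (\prod_(j < r) k j ord0) * eval_on T u.
  move=> u hu; rewrite hE -big_split /=; apply: prodr_ge0 => j _.
  case: (hu j) => [[_ hc] hf]; case: (hk j) => _ hn.
  exact: sign_lemma.
have hs0 : \prod_(j < r) k j ord0 != 0 by apply/prodf_neq0 => j _.
move: hs0; rewrite neq_lt => /orP [hn | hp].
  right => u hu; rewrite hN oppr_ge0; have := hsgn u hu; by rewrite nmulr_rge0.
left => u hu; have := hsgn u hu; by rewrite pmulr_rge0.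
Qed.
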